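(* For all positive integers $k,t$, with $\mathcal{W}$ the weight partition of $\mathbb{F}_q^k$, $$\frac{2q}{(k+1)^2(q-1)-a(q-a)}\,S_{k,t}\;\le\; r_{\mathcal{W}}(k,t)\;\le\; N_q\big(\min(2t+1,k+1),\,2t\big),$$ where $a=(k+1)\bmod q$ and $$S_{k,t}=\begin{cases}\dfrac{k(k+1)(6t+1-k)}{6}, & k\le 2t,\\[4pt] \dfrac{t(2t+1)(3k-2t+1)}{3}, & k\ge 2t.\end{cases}$$
   Context: $\mathcal{W}=\{W_0,\ldots,W_k\}$ with $W_i=\{u\in\mathbb{F}_q^k:\mathrm{wt}(u)=i\}$ (Hamming weight). A $(\mathcal{P},t)$-encoding with redundancy $r$ is a systematic map $\mathcal{C}:\mathbb{F}_q^k\to\mathbb{F}_q^{k+r}$, $\mathcal{C}(u)=(u,p(u))$, with Hamming distance $d(\mathcal{C}(u),\mathcal{C}(v))\ge 2t+1$ whenever $u,v$ lie in different blocks of $\mathcal{P}$; $r_{\mathcal{P}}(k,t)$ is the minimum such $r$. $N_q(M,d)$ denotes the minimum length of a $q$-ary code with $M$ codewords and minimum Hamming distance $d$. *)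

(* Defs.v *)
From HB Require Import structures.
From mathcomp Require Import all_boot all_order all_algebra.
Set Implicit Arguments. Unset Strict Implicit. Unset Printing Implicit Defensive.
Import Order.TTheory GRing.Theory Num.Theory.

Section Hamming.
Variable F : finFieldType.

Definition wt n (u : 'rV[F]_n) : nat := #|[set i | u ord0 i != 0%R]|.
Definition hdist n (u v : 'rV[F]_n) : nat := #|[set i | u ord0 i != v ord0 i]|.

(* There is a systematic (W,t)-encoding with redundancy r, W the weight
   partition: a map p : F^k -> F^r such that C(u) = (u, p u) satisfies
   d(C u, C v) >= 2t+1 whenever wt u != wt v (u, v in different blocks). *)
Definition weight_encodable (k t r : nat) : bool :=
  [exists p : {ffun 'rV[F]_k -> 'rV[F]_r},
     [forall u, [forall v, (wt u != wt v) ==>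
        (2 * t + 1 <= hdist (row_mx u (p u)) (row_mx v (p v)))]]].

Definition code_exists (M d n : nat) : bool :=
  [exists C : {set 'rV[F]_n},
     (#|C| == M) && [forall x in C, forall y in C, (x != y) ==> (d <= hdist x y)]].

Definition blockv n s (j : nat) : 'rV[F]_(n * s) :=
  \row_(i < n * s) (if i %/ s == j then 1%R else 0%R : F).

Lemma blockv_dist n s j j' : j < n -> j != j' ->
  s <= hdist (blockv n s j) (blockv n s j').
Proof.
move=> ltjn njj.
have lt i : i < s -> j * s + i < n * s.
  move=> lis; apply: (@leq_trans (j * s + s)); first by rewrite ltn_add2l.
  by rewrite -mulSnr leq_mul2r ltjn orbT.
pose f (i : 'I_s) : 'I_(n * s) := Ordinal (lt i (ltn_ord i)).
have finj : injective f.
  by move=> x y /(congr1 val) /= /eqP; rewrite eqn_add2l => /eqP/val_inj.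
apply: (@leq_trans #|f @: setT|); first by rewrite card_imset // cardsT card_ord.
rewrite /hdist.
apply: subset_leq_card; apply/subsetP => x /imsetP [i _ ->].
have sp : 0 < s by case: (i) => m; apply: leq_trans; rewrite ltnS.
rewrite inE !mxE /= divnMDl // divn_small // addn0 eqxx.
by case: ifP => [/eqP ej|_]; [rewrite ej eqxx in njj | rewrite oner_neq0].
Qed.

Lemma hdist_row_mx k r (a c : 'rV[F]_k) (b e : 'rV[F]_r) :
  hdist b e <= hdist (row_mx a b) (row_mx c e).
Proof.
rewrite /hdist -(card_imset _ (@rshift_inj k r)).
apply: subset_leq_card; apply/subsetP => x /imsetP [i].
by rewrite !inE => ne ->; rewrite !row_mxEr.
Qed.

Lemma weight_encodable_exists k t : exists r, weight_encodable k t r.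
Proof.
exists ((k.+1) * (2 * t + 1)); apply/existsP.
exists [ffun u => blockv k.+1 (2 * t + 1) (wt u)].
apply/forallP => u; apply/forallP => v; apply/implyP => nw.
apply: leq_trans (hdist_row_mx _ _ _ _); rewrite !ffunE.
apply: blockv_dist nw; rewrite ltnS /wt.
by apply: leq_trans (max_card _) _; rewrite card_ord.
Qed.

Lemma code_exists_exists M d : exists n, code_exists M d n.
Proof.
exists (M * d.+1); apply/existsP.
pose g (j : 'I_M) := blockv M d.+1 j.
have ginj : injective g.
  move=> x y gxy; apply/eqP; apply/negPn/negP => nxy.
  have := blockv_dist d.+1 (ltn_ord x) nxy; rewrite -/(g x) -/(g y) gxy.
  by rewrite /hdist (_ : [set _ | _] = set0) ?cards0 //; apply/setP => i; rewrite !inE eqxx.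
exists (g @: setT); rewrite card_imset // cardsT card_ord eqxx /=.
apply/forall_inP => x /imsetP [j _ ->]; apply/forall_inP => y /imsetP [j' _ ->].
apply/implyP => nj; have nj' : (j : nat) != j'.
  by apply: contra nj => /eqP/val_inj ->.
by apply: leq_trans (blockv_dist _ (ltn_ord j) nj'); apply: leqnSn.
Qed.

Definition r_W (k t : nat) : nat := ex_minn (weight_encodable_exists k t).

Definition N_q (M d : nat) : nat := ex_minn (code_exists_exists M d).

End Hamming.

Local Open Scope ring_scope.

Definition S_kt (k t : nat) : rat :=
  if (k <= 2 * t)%N then (k%:Q * (k.+1)%:Q * ((6 * t + 1)%:Q - k%:Q)) / 6%:Q
  else (t%:Q * (2 * t + 1)%:Q * ((3 * k + 1)%:Q - (2 * t)%:Q)) / 3%:Q.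

(* Main.v *)
Require Import Defs.
From HB Require Import structures.
From mathcomp Require Import all_boot all_order all_algebra.
Import Order.TTheory GRing.Theory Num.Theory.
From mathcomp Require Import zify ring lra.
Lemma fin_arith O S2 M m a b : (O + S2 = M * M -> (2 * m + 1) * M <= S2 + (a + b) * (m * (m + 1)) -> M = m * (a + b) + a -> 0 < b ->
  (a + b) * O + a * b <= M ^ 2 * ((a + b) - 1))%N.
Proof. move=> h1 h2 h3 hb.
have e1 : ((a + b) * ((2 * m + 1) * M) = M * M + a * b + (a + b) * ((a + b) * (m * (m + 1))))%N.
  by rewrite h3; ring.
have e2 : ((a + b) * ((2 * m + 1) * M) <= (a + b) * S2 + (a + b) * ((a + b) * (m * (m + 1))))%N.
  by rewrite -mulnDr leq_mul2l h2 orbT.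
have e3 : ((a + b) * O + (a + b) * S2 = (a + b) * (M * M))%N by rewrite -mulnDr h1.
have e4 : (M ^ 2 * ((a + b) - 1) = (a + b) * (M * M) - M * M)%N.
  by rewrite mulnBr muln1 mulnC expnS expn1.
rewrite e4. move: e1 e2 e3.
generalize ((a + b) * ((2 * m + 1) * M))%N ((a + b) * ((a + b) * (m * (m + 1))))%N ((a + b) * O)%N ((a + b) * S2)%N ((a + b) * (M * M))%N (M * M)%N (a * b)%N.
move=> *; lia.
Qed.
Lemma termw n m : ((2 * m + 1) * n <= n * n + m * (m + 1))%N.
Proof. case: (leqP n m) => h.
  have [d ->] : exists d, m = n + d by exists (m - n); lia.
  rewrite !mulnDr !mulnDl; lia.
have [d ->] : exists d, n = m + 1 + d by exists (n - m - 1); lia.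
rewrite !mulnDr !mulnDl; lia.
Qed.

Import Order.TTheory GRing.Theory Num.Theory.

Section H.
Variable F : finFieldType.

Lemma hdist_sum n (u v : 'rV[F]_n) :
  hdist u v = \sum_(i < n) (u ord0 i != v ord0 i : nat).
Proof.
rewrite /hdist -sum1_card big_mkcond /=; apply: eq_bigr => i _.
by rewrite inE; case: ifP.
Qed.

Lemma wt_sum n (u : 'rV[F]_n) :
  wt u = \sum_(i < n) (u ord0 i != 0%R : nat).
Proof.
rewrite /wt -sum1_card big_mkcond /=; apply: eq_bigr => i _.
by rewrite inE; case: ifP.
Qed.

Lemma hdist_row_mx_eq k r (a c : 'rV[F]_k) (b e : 'rV[F]_r) :
  hdist (row_mx a b) (row_mx c e) = (hdist a c + hdist b e)%N.
Proof.
rewrite !hdist_sum big_split_ord; congr (_ + _)%N; apply: eq_bigr => i _.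
  by rewrite !row_mxEl.
by rewrite !row_mxEr.
Qed.

Lemma hdist_sym n (u v : 'rV[F]_n) : hdist u v = hdist v u.
Proof. by rewrite !hdist_sum; apply: eq_bigr => i _; rewrite eq_sym. Qed.

Lemma wt_le_hdist n (u v : 'rV[F]_n) : (wt u <= wt v + hdist u v)%N.
Proof.
rewrite !wt_sum hdist_sum -big_split /=; apply: leq_sum => i _.
by case: (eqVneq (u ord0 i) 0%R) => //= nu; case: eqVneq => // ->; rewrite nu.
Qed.

Lemma wt_le n (u : 'rV[F]_n) : (wt u <= n)%N.
Proof. by rewrite /wt; apply: leq_trans (max_card _) _; rewrite card_ord. Qed.

Definition uw k (w : nat) : 'rV[F]_k :=
  \row_(l < k) (if (l < w)%N then 1%R else 0%R).

Lemma sum_lt_aux k i j :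
  (\sum_(l < k) ((l < i)%N != (l < j)%N : nat) =
   (minn k j - minn k i) + (minn k i - minn k j))%N.
Proof.
elim: k => [|k IH]; first by rewrite big_ord0 !min0n.
rewrite big_ord_recr /= IH.
case: (ltnP k i) => hi; case: (ltnP k j) => hj /=.
all: lia.
Qed.

Lemma wt_uw k w : (w <= k)%N -> wt (uw k w) = w.
Proof.
move=> wk; rewrite wt_sum.
rewrite (eq_bigr (fun l : 'I_k => ((l < 0)%N != (l < w)%N : nat))).
  by rewrite sum_lt_aux; lia.
by move=> l _; rewrite mxE; case: ifP => _ /=; rewrite ?oner_eq0 ?eqxx.
Qed.

Lemma hdist_uw k i j : (hdist (uw k i) (uw k j) <= (i - j) + (j - i))%N.
Proof.
rewrite hdist_sum.
rewrite (eq_bigr (fun l : 'I_k => ((l < i)%N != (l < j)%N : nat))).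
  by rewrite sum_lt_aux; lia.
move=> l _; rewrite !mxE.
by case: ifP => _; case: ifP => _ /=; rewrite ?eqxx ?oner_eq0 // eq_sym oner_eq0.
Qed.


Lemma count_coord (M : nat) (x : 'I_M -> F) :
  (#|F| * (\sum_(i < M) \sum_(j < M) (x i != x j : nat)) + (M %% #|F|) * (#|F| - M %% #|F|)
    <= M ^ 2 * (#|F| - 1))%N.
Proof.
pose n f := (\sum_(j < M) (x j == f : nat))%N.
have h1 i : (\sum_(j < M) (x i != x j : nat) + n (x i) = M)%N.
  rewrite /n -big_split /= (eq_bigr (fun _ => 1%N)); last by move=> j _; rewrite [x j == _]eq_sym; case: eqP.
  by rewrite sum_nat_const card_ord muln1.
have hO : (\sum_(i < M) \sum_(j < M) (x i != x j : nat) + \sum_(i < M) n (x i) = M * M)%N.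
  rewrite -big_split /= (eq_bigr (fun _ => M)); last by move=> i _; exact: h1.
  by rewrite sum_nat_const card_ord.
have h2 : (\sum_(i < M) n (x i) = \sum_(f : F) n f * n f)%N.
  transitivity (\sum_(i < M) \sum_(f : F) (x i == f : nat) * n f)%N.
    apply: eq_bigr => i _; rewrite (bigD1 (x i)) //= eqxx mul1n big1 ?addn0 //.
    by move=> f; rewrite eq_sym => /negbTE ->.
  rewrite exchange_big /=; apply: eq_bigr => f _; rewrite -big_distrl /=.
  done.
have h3 : (\sum_(f : F) n f = M)%N.
  rewrite /n exchange_big /= (eq_bigr (fun _ => 1%N)); last first.
    move=> j _; rewrite (bigD1 (x j)) //= eqxx big1 ?addn0 //.
    by move=> f; rewrite eq_sym => /negbTE ->.
  by rewrite sum_nat_const card_ord muln1.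
set m := (M %/ #|F|)%N.
have h4 : ((2 * m + 1) * M <= \sum_(f : F) n f * n f + #|F| * (m * (m + 1)))%N.
  rewrite -h3 big_distrr /= -sum_nat_const -big_split /=.
  by apply: leq_sum => f _; apply: termw.
have qp : (0 < #|F|)%N by apply/card_gt0P; exists 0%R.
have hb : (0 < #|F| - M %% #|F|)%N by rewrite subn_gt0 ltn_mod.
have H := @fin_arith (\sum_(i < M) \sum_(j < M) (x i != x j : nat)) (\sum_(f : F) n f * n f) M m
  (M %% #|F|) (#|F| - M %% #|F|).
rewrite subnKC in H; last by rewrite ltnW // ltn_mod.
apply: H.
- rewrite -h2; exact: hO.
- exact: h4.
- exact: divn_eq.
- exact: hb.
Qed.

End H.
Arguments hdist_sum {F n}. Arguments wt_sum {F n}. Arguments hdist_row_mx_eq {F k r}.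
Arguments hdist_sym {F n}. Arguments wt_le_hdist {F n}. Arguments wt_le {F n}. Arguments count_coord {F M}.

Local Open Scope ring_scope.
Lemma S_ktE k t : S_kt k t = if (k <= 2 * t)%N then (k%:R * (k.+1)%:R * ((6 * t + 1)%N%:R - k%:R)) / 6%:R
  else (t%:R * (2 * t + 1)%N%:R * ((3 * k + 1)%N%:R - (2 * t)%N%:R)) / 3%:R :> rat.
Proof. reflexivity. Qed.
Lemma Qn (n : nat) : n%:Q = n%:R.
Proof. reflexivity. Qed.

Definition Dn t (i j : nat) : nat := ((2 * t + 1 - ((i - j) + (j - i))) * (i != j))%N.
Definition Tn t M : nat := (\sum_(i < M) \sum_(j < M) Dn t i j)%N.
Definition Hn t M : nat := (\sum_(i < M) (2 * t + 1 - (M - i)))%N.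
Definition Hq t (M : nat) : rat := if (M <= 2 * t)%N then M%:R * ((4 * t + 1)%N%:R - M%:R) / 2%:R
  else t%:R * (2 * t + 1)%N%:R.

Lemma T_rec t M : Tn t M.+1 = (Tn t M + 2 * Hn t M)%N.
Proof.
rewrite /Tn big_ord_recr /=.
rewrite (eq_bigr (fun i : 'I_M => \sum_(j < M) Dn t i j + Dn t i M)%N); last first.
  by move=> i _; rewrite big_ord_recr.
have e0 : Dn t M M = 0%N by rewrite /Dn eqxx muln0.
rewrite big_split /= big_ord_recr /= e0 addn0.
have e1 : (\sum_(i < M) Dn t i M = Hn t M)%N.
  apply: eq_bigr => i _; rewrite /Dn neq_ltn ltn_ord muln1.
  by congr (_ - _)%N; have := ltn_ord i; lia.
have e2 : (\sum_(i < M) Dn t M i = Hn t M)%N.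
  apply: eq_bigr => i _; rewrite /Dn neq_ltn ltn_ord orbT muln1.
  by congr (_ - _)%N; have := ltn_ord i; lia.
rewrite e1 e2; lia.
Qed.

Lemma H_rec t M : Hn t M.+1 = (Hn t M + (2 * t - M))%N.
Proof.
rewrite /Hn big_ord_recl /= subn0 addnC; congr (_ + _)%N; try lia.
all: try by apply: eq_bigr => i _; rewrite lift0 /= subSS.
Qed.


Lemma b1 t M : (M.+1 <= 2 * t)%N -> Hq t M + (2 * t - M)%N%:R = Hq t M.+1.
Proof. move=> h1; rewrite /Hq h1 (leq_trans (leqnSn M) h1) natrB; last by lia.
  rewrite ?natrD ?natrM /=. rewrite -addn1 ?natrD. by field.
Qed.
Lemma b2 t M : (2 * t < M.+1)%N -> (M <= 2 * t)%N -> Hq t M + (2 * t - M)%N%:R = Hq t M.+1.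
Proof. move=> h1 h2; rewrite /Hq h2 (leqNgt M.+1) h1 /=.
  have -> : M = (2 * t)%N by lia.
  rewrite subnn ?addr0 ?natrD ?natrM ?leqnn. field. by [].
Qed.
Lemma b3 t M : (2 * t < M)%N -> Hq t M + (2 * t - M)%N%:R = Hq t M.+1.
Proof. move=> h; rewrite /Hq (leqNgt M) h (leqNgt M.+1) ltnW //=.
have -> : (2 * t - M)%N = 0%N by lia.
by rewrite mulr0n addr0.
Qed.
Lemma H_closed t M : (Hn t M)%:R = Hq t M :> rat.
Proof.
elim: M => [|M IH]; first by rewrite /Hn big_ord0 /Hq /= mul0r mul0r.
rewrite H_rec natrD IH.
case: (leqP M.+1 (2 * t)) => h1; first exact: b1.
case: (leqP M (2 * t)) => h2; first exact: b2.
exact: b3.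
Qed.

Lemma s1 k t : (k.+1 <= 2 * t)%N -> S_kt k.+1 t = S_kt k t + Hq t k.+1.
Proof. move=> h1; rewrite !S_ktE /Hq h1 (leq_trans (leqnSn k) h1).
rewrite ?natrD ?natrM ?mulrS. field. by [].
Qed.
Lemma s2 k t : (2 * t < k.+1)%N -> (k <= 2 * t)%N -> S_kt k.+1 t = S_kt k t + Hq t k.+1.
Proof. move=> h1 h2; rewrite !S_ktE /Hq h2 (leqNgt k.+1) h1 /=.
have -> : k = (2 * t)%N by lia.
rewrite ?natrD ?natrM ?mulrS. field. by [].
Qed.
Lemma s3 k t : (2 * t < k)%N -> S_kt k.+1 t = S_kt k t + Hq t k.+1.
Proof. move=> h; rewrite !S_ktE /Hq (leqNgt k) h (leqNgt k.+1) ltnW //=.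
rewrite ?natrD ?natrM ?mulrS. field. by [].
Qed.
Lemma S_rec k t : S_kt k.+1 t = S_kt k t + (Hn t k.+1)%:R.
Proof.
rewrite H_closed.
case: (leqP k.+1 (2 * t)) => h1; first exact: s1.
case: (leqP k (2 * t)) => h2; first exact: s2.
exact: s3.
Qed.

Lemma T_closed k t : (Tn t k.+1)%:R = 2%:R * S_kt k t :> rat.
Proof.
elim: k => [|k IH].
  have -> : Tn t 1 = 0%N by rewrite /Tn big_ord1 big_ord1 /Dn eqxx muln0.
  by rewrite S_ktE leq0n !mul0r mulr0.
rewrite T_rec natrD IH S_rec natrM; ring.
Qed.

Lemma lower_nat {F : finFieldType} {k} t {r} (p : {ffun 'rV[F]_k -> 'rV[F]_r}) :
  [forall u, [forall v, (wt u != wt v) ==>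
        (2 * t + 1 <= hdist (row_mx u (p u)) (row_mx v (p v)))%N]] ->
  (#|F| * Tn t k.+1 + r * ((k.+1 %% #|F|) * (#|F| - k.+1 %% #|F|))
     <= r * (k.+1 ^ 2 * (#|F| - 1)))%N.
Proof.
move=> /forallP hp.
pose P (i : 'I_k.+1) := p (uw F k i).
have key (i j : 'I_k.+1) : (Dn t i j <= hdist (P i) (P j))%N.
  rewrite /Dn; case: (eqVneq i j) => [->|nij]; first by rewrite eqxx muln0.
  have nij' : (i : nat) != j by [].
  rewrite nij' /= muln1.
  have wi : wt (uw F k i) = i by apply: wt_uw; rewrite -ltnS.
  have wj : wt (uw F k j) = j by apply: wt_uw; rewrite -ltnS.
  have := hp (uw F k i) => /forallP /(_ (uw F k j)) /implyP.
  rewrite wi wj => /(_ nij'); rewrite hdist_row_mx_eq.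
  have := hdist_uw F k i j; rewrite /P; lia.
have hT : (Tn t k.+1 <= \sum_(c < r) \sum_(i < k.+1) \sum_(j < k.+1)
             (P i ord0 c != P j ord0 c : nat))%N.
  rewrite exchange_big /=; apply: leq_sum => i _.
  rewrite exchange_big /=; apply: leq_sum => j _.
  by rewrite -hdist_sum; apply: key.
have hC : (\sum_(c < r) (#|F| * (\sum_(i < k.+1) \sum_(j < k.+1) (P i ord0 c != P j ord0 c : nat))
            + (k.+1 %% #|F|) * (#|F| - k.+1 %% #|F|))
          <= \sum_(c < r) (k.+1 ^ 2 * (#|F| - 1)))%N.
  by apply: leq_sum => c _; apply: (count_coord (fun i => P i ord0 c)).
rewrite big_split /= -big_distrr /= !sum_nat_const card_ord in hC.
apply: leq_trans hC; rewrite [(r * _)%N]mulnC leq_add2r leq_mul2l hT orbT.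
done.
Qed.

Theorem corollary5 (F : finFieldType) (k t : nat) :
  (0 < k)%N -> (0 < t)%N ->
  let q := #|F| in
  let a := (k.+1 %% q)%N in
  ((2 * q)%N%:Q / ((k.+1 ^ 2 * (q - 1))%N%:Q - (a * (q - a))%N%:Q)) * S_kt k t
    <= (r_W F k t)%:Q
  /\ (r_W F k t <= N_q F (minn (2 * t + 1) k.+1) (2 * t))%N.
Proof.
move=> k0 t0 q a; split.
  rewrite /r_W; case: ex_minnP => r /existsP [p hp] _.
  have hn := lower_nat t _ hp.
  have hS : 2%:R * S_kt k t = (Tn t k.+1)%:R :> rat by rewrite T_closed.
  have S0 : 0 <= S_kt k t.
    have : 0 <= (Tn t k.+1)%:R :> rat by rewrite ler0n.
    rewrite -hS; lra.
  have hq : (q * Tn t k.+1 + r * (a * (q - a)) <= r * (k.+1 ^ 2 * (q - 1)))%N by exact: hn.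
  move: hq; rewrite -(ler_nat rat) !natrD !natrM -hS !Qn.
  set X := ((k.+1 ^ 2 * (q - 1))%N)%:R.
  set Y := ((a * (q - a))%N)%:R.
  move=> hq.
  have q0 : 0 <= q%:R :> rat by rewrite ler0n.
  have r0 : 0 <= r%:R :> rat by rewrite ler0n.
  rewrite natrM.
  case: (ltrP 0 (X - Y)) => hD.
    rewrite mulrAC ler_pdivrMr //; nra.
  have hz : (X - Y)^-1 <= 0 by rewrite invr_le0.
  move: hz; set z := (X - Y)^-1 => hz.
  have hw : z * (q%:R * S_kt k t) <= 0 by rewrite mulr_le0_ge0 // mulr_ge0.
  have -> : 2 * q%:R * z * S_kt k t = 2 * (z * (q%:R * S_kt k t)) by ring.
  lra.
rewrite /N_q; case: ex_minnP => n /existsP [C /andP [/eqP cardC /forall_inP hC]] _.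
rewrite /r_W; case: ex_minnP => r _ hmin; apply: hmin.
set M' := minn (2 * t + 1) k.+1.
have M'0 : (0 < M')%N by rewrite /M'; lia.
apply/existsP; exists [ffun u => nth 0%R (enum C) (wt u %% M')].
apply/forallP => u; apply/forallP => v; apply/implyP => nw.
rewrite !ffunE hdist_row_mx_eq.
have hx := wt_le u; have hy := wt_le v.
have h1 := wt_le_hdist u v; have h2 := wt_le_hdist v u.
rewrite hdist_sym in h2.
case: (leqP (2 * t + 1) (hdist u v)) => hd.
  exact: leq_trans hd (leq_addr _ _).
have hres : (wt u %% M' != wt v %% M')%N.
  apply/negP => /eqP e.
  case: (leqP (wt u) (wt v)) => hxy.
    have := eqn_mod_dvd M' hxy; rewrite e eqxx => /esym hdv.
    have : (0 < wt v - wt u)%N by move: nw; lia.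
    move=> /dvdn_leq /(_ hdv); rewrite /M'; lia.
  have hxy' := ltnW hxy.
  have := eqn_mod_dvd M' hxy'; rewrite e eqxx => /esym hdv.
  have : (0 < wt u - wt v)%N by lia.
  move=> /dvdn_leq /(_ hdv); rewrite /M'; lia.
have sz : size (enum C) = M' by rewrite -cardE cardC.
have hu : (wt u %% M' < size (enum C))%N by rewrite sz ltn_pmod.
have hv : (wt v %% M' < size (enum C))%N by rewrite sz ltn_pmod.
have hne : nth 0%R (enum C) (wt u %% M') != nth 0%R (enum C) (wt v %% M').
  by rewrite nth_uniq // enum_uniq.
have mu := mem_nth 0%R hu; have mv := mem_nth 0%R hv.
rewrite mem_enum in mu; rewrite mem_enum in mv.
have := hC _ mu => /forall_inP /(_ _ mv).
rewrite hne /= => hd2.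
have : (1 <= hdist u v)%N by move: nw; lia.
move=> h0; have H := leq_add hd2 h0; rewrite (addnC (hdist u v)); exact H.
Qed.
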